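(* Let $\mathbb{P}$ be a pre-Pawlikowski lattice and let $\sigma$ be a strategy for Player I in the game $\mathsf{G}_{\mathrm{fin}}(\mathbb{V}_1,\mathbb{V}_1)$. If $\mathsf{S}_{\mathrm{fin}}(\mathbb{V}_1,\mathbb{V}_1)$ holds, then there is a play $(A_0,F_0,A_1,F_1,\dots)$ according to $\sigma$ such that for every $p\in\mathbb{P}\setminus\{1\}$ we have $\sup F_n\not\leq p$ for infinitely many $n$.
   Context: A lattice is a poset where any two elements have a supremum and an infimum; it is bounded if it has a minimum $0$ and a maximum $1$. A prime element is $q\neq 1$ with: $a\wedge b\leq q$ implies $a\leq q$ or $b\leq q$. Enough prime elements: whenever $a\not\leq b$ there is a prime $q$ with $b\leq q$, $a\not\leq q$. A pre-Pawlikowski lattice is a bounded lattice with enough prime elements. $\mathbb{V}_1$ is the family of subsets $A\subseteq\mathbb{P}$ with $\sup A=1$. $\mathsf{S}_{\mathrm{fin}}(\mathbb{V}_1,\mathbb{V}_1)$: for every sequence $(A_n)_{n\in\omega}$ in $\mathbb{V}_1$ there are finite $F_n\subseteq A_n$ with $\sup\bigcup_n F_n=1$. The game $\mathsf{G}_{\mathrm{fin}}(\mathbb{V}_1,\mathbb{V}_1)$: in inning $n\in\omega$ Player I plays $A_n\in\mathbb{V}_1$ and Player II responds with a finite $F_n\subseteq A_n$; II wins if $\sup\bigcup_n F_n=1$. A strategy for Player I assigns Player I's move to each finite sequence of Player II's previous moves; a play is according to $\sigma$ if each $A_n$ is the value of $\sigma$ at $(F_0,\dots,F_{n-1})$. For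 a finite set $F$, $\sup F$ is its join (with $\sup\emptyset=0$). *)

(* Defs.v *)
From HB Require Import structures.
From mathcomp Require Import all_boot all_order.
Set Implicit Arguments. Unset Strict Implicit. Unset Printing Implicit Defensive.
Import Order.Theory.
Local Open Scope order_scope.

Section Defs.
Context {d : Order.disp_t} {T : tbLatticeType d}.

Definition is_sup (A : T -> Prop) (s : T) : Prop :=
  (forall a, A a -> a <= s) /\ (forall u, (forall a, A a -> a <= u) -> s <= u).

Definition V1 (A : T -> Prop) : Prop := is_sup A \top.

(* join of a finite set (represented by a list); join of [::] is \bot *)
Definition fsup (F : seq T) : T := \join_(x <- F) x.

Definition prime_elt (q : T) : Prop :=
  q != \top /\ forall a b, a `&` b <= q -> a <= q \/ b <= q.

Definition enough_primes : Prop :=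
  forall a b : T, ~~ (a <= b) -> exists q, prime_elt q /\ b <= q /\ ~~ (a <= q).

Definition Sfin_V1 : Prop :=
  forall A : nat -> (T -> Prop), (forall n, V1 (A n)) ->
  exists F : nat -> seq T, (forall n x, x \in F n -> A n x) /\
    V1 (fun x => exists n, x \in F n).

(* strategy for Player I in G_fin(V_1,V_1): maps the finite sequence of
   Player II's previous moves to a move in V_1 *)
Definition strategyI (sigma : seq (seq T) -> (T -> Prop)) : Prop :=
  forall h, V1 (sigma h).

(* the play with Player II's moves F is according to sigma:
   A_n = sigma (F_0,...,F_{n-1}) and F_n is a finite subset of A_n *)
Definition play_by (sigma : seq (seq T) -> (T -> Prop)) (F : nat -> seq T) : Prop :=
  forall n x, x \in F n -> sigma [seq F i | i <- iota 0 n] x.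

End Defs.

(* Main.v *)
Require Import Defs.
From HB Require Import structures.
From mathcomp Require Import all_boot all_order.
From Stdlib Require Import Classical ClassicalEpsilon.
From mathcomp Require Import zify.
Import Order.Theory.

Fixpoint wl (m l : nat) : seq (seq nat) :=
  if l is l'.+1 then [::] :: [seq i :: t | i <- iota 0 m.+1, t <- wl m l']
  else [:: [::]].

Lemma wl_S m l : wl m l.+1 = [::] :: [seq i :: t | i <- iota 0 m.+1, t <- wl m l].
Proof. by []. Qed.

Lemma wl_in m l t : size t <= l -> all (fun i => i <= m) t -> t \in wl m l.
Proof.
elim: t l => [|i t IH] [|l] //; rewrite ?wl_S ?mem_head //.
rewrite [size _]/= ltnS => st /andP [im alt]; rewrite in_cons; apply/orP; right.
apply/allpairsP; exists (i, t); split; [by rewrite mem_iota | exact: IH | by []].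
Qed.

Lemma wl_out m l t : t \in wl m l -> (size t <= l) && all (fun i => i <= m) t.
Proof.
elim: l t => [|l IH] t; first by rewrite mem_seq1 => /eqP ->.
rewrite wl_S in_cons => /orP [/eqP -> //|/allpairsP [[i t'] [ii /IH /andP [s1 a1] ->]]].
move: ii; rewrite mem_iota => /andP [_ ii].
by rewrite [size _]/= ltnS s1 [all _ _]/= a1 andbT.
Qed.

Lemma wl_mono m m' t : m <= m' -> t \in wl m m -> t \in wl m' m'.
Proof.
move=> mm /wl_out /andP [st alt]; apply: wl_in; first exact: leq_trans mm.
by apply/allP => i /(allP alt) im; apply: leq_trans mm.
Qed.

Lemma interval (x : nat -> nat) : (forall k, x k < x k.+1) ->
  forall K n, x K <= n -> exists k, K <= k /\ x k <= n < x k.+1.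
Proof.
move=> xs K n Kn; rewrite -(subnK Kn); elim: (n - x K) => [|dd [k [Kk /andP [h1 h2]]]].
  by exists K; split => //; rewrite add0n leqnn xs.
case: (ltnP (dd.+1 + x K) (x k.+1)) => h3.
  by exists k; rewrite h3 andbT; split => //; lia.
exists k.+1; split; first lia.
have := xs k.+1; lia.
Qed.

Fixpoint xs (g : nat -> nat) k :=
  if k is k'.+1 then maxn (xs g k').+1 (\max_(i < (xs g k').+1) g i) else 0.

Lemma xs_inc g k : xs g k < xs g k.+1.
Proof. by rewrite /= leq_maxl. Qed.

Lemma xs_mono g i j : i <= j -> xs g i <= xs g j.
Proof.
move=> ij; rewrite -(subnK ij); elim: (j - i) => // n IH.
by apply: leq_trans IH _; rewrite addSn ltnW // xs_inc.
Qed.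

Lemma xs_ge g i : i <= xs g i.
Proof. by elim: i => // i IH; apply: leq_trans (xs_inc g i). Qed.

Lemma xs_big g k n : n <= xs g k.+1 -> g n <= xs g k.+2.
Proof.
move=> h; rewrite [xs g k.+2]/=; apply: leq_trans (leq_maxr _ _).
have Hi : n < (xs g k.+1).+1 by [].
exact: (leq_bigmax (F := fun i : 'I_(xs g k.+1).+1 => g i) (Ordinal Hi)).
Qed.

Local Open Scope order_scope.

Lemma fchoice (A B : Type) (P : A -> B -> Prop) :
  (forall a, exists b, P a b) -> exists f : A -> B, forall a, P a (f a).
Proof.
move=> H; exists (fun a => proj1_sig (constructive_indefinite_description _ (H a))).
by move=> a; case: (constructive_indefinite_description _ (H a)).
Qed.

Section Aux.
Context {d : Order.disp_t} {T : tbLatticeType d}.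

Lemma V1_prime (A : T -> Prop) : @enough_primes d T ->
  (forall q, prime_elt q -> exists e, A e /\ ~~ (e <= q)) -> V1 A.
Proof.
move=> EP H; split=> [a _|u Hu]; first exact: lex1.
case: (boolP (\top <= u)) => // /EP [q [Pq [uq nq]]].
have [e [Ae eq]] := H q Pq.
by move: eq; rewrite (le_trans (Hu _ Ae) uq).
Qed.

Lemma V1_ex (A : T -> Prop) q : V1 A -> q != \top -> exists e, A e /\ ~~ (e <= q).
Proof.
move=> [_ H] nq; apply: NNPP => C.
have : \top <= q.
  apply: H => a Aa; case: (boolP (a <= q)) => // naq.
  by case: C; exists a.
by rewrite le1x (negbTE nq).
Qed.

Lemma prime_meet (q : T) (I : eqType) (l : seq I) (f : I -> T) : prime_elt q ->
  (forall i, i \in l -> ~~ (f i <= q)) -> ~~ (\meet_(i <- l) f i <= q).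
Proof.
move=> [nq Pq]; elim: l => [|i l IH] H; first by rewrite big_nil le1x.
rewrite big_cons; apply/negP => /Pq [].
  by apply/negP; apply: H; rewrite mem_head.
by apply/negP; apply: IH => j jl; apply: H; rewrite in_cons jl orbT.
Qed.
End Aux.

Lemma nle_trans {d : Order.disp_t} {T : tbLatticeType d} (u v q : T) :
  u <= v -> ~~ (u <= q) -> ~~ (v <= q).
Proof. by move=> uv; apply: contra => vq; apply: le_trans vq. Qed.
Arguments nle_trans {d T u v q}.

Section Main.
Context {d : Order.disp_t} {T : tbLatticeType d}.
Variable E : seq (seq T) -> nat -> seq T.
Hypothesis EP : @enough_primes d T.
Hypothesis E_V1 : forall h, V1 (fun x => exists n, x \in E h n).

Definition G h k := flatten [seq E h i | i <- iota 0 k.+1].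
Definition av h k := fsup (G h k).
Definition hist (s : seq nat) := foldl (fun h k => rcons h (G h k)) [::] s.
Definition bv m k := \meet_(t <- wl m m) av (hist t) k.
Definition cv m k := \join_(j <- iota 0 k.+1) (bv m j `&` bv j k).

Lemma G_mono h k k' x : (k <= k')%N -> x \in G h k -> x \in G h k'.
Proof.
rewrite /G => kk /flatten_mapP [i ii xi]; apply/flatten_mapP; exists i => //.
move: ii; rewrite !mem_iota !add0n => /andP [_ ik]; exact: leq_trans kk.
Qed.

Lemma fsup_sub (l1 l2 : seq T) : (forall x, x \in l1 -> x \in l2) -> fsup l1 <= fsup l2.
Proof.
move=> H; apply/joinsP_seq => x x1 _; apply: joins_sup_seq => //; exact: H.
Qed.

Lemma av_mono h k k' : (k <= k')%N -> av h k <= av h k'.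
Proof. by move=> kk; apply: fsup_sub => x; apply: G_mono. Qed.

Lemma av_ex h q : q != \top -> exists k, ~~ (av h k <= q).
Proof.
move=> nq; have [e [[n en] eq]] := V1_ex _ _ (E_V1 h) nq.
exists n; apply: nle_trans eq; apply: joins_sup_seq => //.
by rewrite /G; apply/flatten_mapP; exists n => //; rewrite mem_iota add0n ltnSn.
Qed.

Lemma bv_mono m k k' : (k <= k')%N -> bv m k <= bv m k'.
Proof.
move=> kk; apply/meetsP_seq => t tl _; apply: meets_max_seq tl _ _ => //.
exact: av_mono.
Qed.

Lemma bv_anti m m' k : (m <= m')%N -> bv m' k <= bv m k.
Proof.
move=> mm; apply/meetsP_seq => t tl _; apply: meets_inf_seq => //.
exact: wl_mono tl.
Qed.

Lemma bv_le m k t : t \in wl m m -> bv m k <= av (hist t) k.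
Proof. by move=> tl; apply: meets_inf_seq. Qed.

Lemma bv_ex m q : prime_elt q -> exists k, ~~ (bv m k <= q).
Proof.
move=> Pq; suff [K HK] : exists K, forall t, t \in wl m m -> ~~ (av (hist t) K <= q).
  by exists K; apply: prime_meet.
elim: (wl m m) => [|t l [K HK]]; first by exists 0%N.
have [k Hk] := av_ex (hist t) _ (proj1 Pq).
exists (maxn K k) => s; rewrite in_cons => /orP [/eqP ->|sl].
  by apply: nle_trans Hk; apply: av_mono; rewrite leq_maxr.
by apply: nle_trans (HK _ sl); apply: av_mono; rewrite leq_maxl.
Qed.

Lemma cv_mono m k k' : (k <= k')%N -> cv m k <= cv m k'.
Proof.
move=> kk; apply/joinsP_seq => j jl _; apply: (joins_min_seq (x:=j)).
- by move: jl; rewrite !mem_iota !add0n => /andP [_ jk]; apply: leq_trans kk.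
- by [].
- by apply: leI2; [exact: lexx | exact: bv_mono].
Qed.

Lemma prime_meet2 (q a b : T) : prime_elt q -> ~~ (a <= q) -> ~~ (b <= q) -> ~~ (a `&` b <= q).
Proof. by move=> [_ Pq] na nb; apply/negP => /Pq [] ?; [move/negP: na | move/negP: nb]. Qed.

Lemma cv_ex m q : prime_elt q -> exists k, ~~ (cv m k <= q).
Proof.
move=> Pq; have [j Hj] := bv_ex m _ Pq; have [k0 Hk0] := bv_ex j _ Pq.
have H1 : bv m j `&` bv j (maxn j k0) <= cv m (maxn j k0).
  rewrite /cv; apply: (joins_sup_seq (fun i => bv m i `&` bv i (maxn j k0))) => //.
  by rewrite mem_iota add0n ltnS leq_maxl.
exists (maxn j k0); apply: nle_trans H1 _.
apply: prime_meet2 => //; apply: nle_trans Hk0; apply: bv_mono; exact: leq_maxr.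
Qed.

Lemma cv_split m k q : ~~ (cv m k <= q) ->
  exists j, [/\ (j <= k)%N, ~~ (bv m j <= q) & ~~ (bv j k <= q)].
Proof.
move=> H; apply: NNPP => C; move/negP: H; apply; apply/joinsP_seq => j jl _.
move: jl; rewrite mem_iota add0n ltnS => /andP [_ jk].
case: (boolP (bv m j <= q)) => [h1|h1]; first by apply: leIxl.
case: (boolP (bv j k <= q)) => [h2|h2]; first by apply: leIxr.
by case: C; exists j.
Qed.

Hypothesis SF : @Sfin_V1 d T.

Lemma cv_bound M (l : seq T) : (forall e, e \in l -> exists k, e = cv M k) ->
  exists K, forall e, e \in l -> e <= cv M K.
Proof.
elim: l => [|e l IH] H; first by exists 0%N.
have [K HK] : exists K, forall e, e \in l -> e <= cv M K.
  by apply: IH => e' el; apply: H; rewrite in_cons el orbT.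
have [k ->] := H e (mem_head _ _).
exists (maxn K k) => e'; rewrite in_cons => /orP [/eqP ->|el].
  by apply: cv_mono; rewrite leq_maxr.
by apply: le_trans (HK _ el) _; apply: cv_mono; rewrite leq_maxl.
Qed.

Lemma tail_g : exists g : nat -> nat, forall q, prime_elt q ->
  forall N, exists n, (N <= n)%N /\ ~~ (cv n (g n) <= q).
Proof.
have H : forall N, exists gN : nat -> nat, forall q, prime_elt q ->
    exists m, ~~ (cv (N + m) (gN m) <= q).
  move=> N.
  have V : forall m, V1 (fun e => exists k, e = cv (N + m) k).
    move=> m; apply: V1_prime EP _ => q Pq; have [k Hk] := cv_ex (N + m) _ Pq.
    by exists (cv (N + m) k); split => //; exists k.
  have [F [F1 F2]] := SF _ V.
  have [gN HgN] : exists gN : nat -> nat, forall m e, e \in F m -> e <= cv (N + m) (gN m).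
    apply: (@fchoice nat nat (fun m K => forall e, e \in F m -> e <= cv (N + m) K)) => m.
    by apply: cv_bound => e eF; exact: F1 eF.
  exists gN => q Pq; have [e [[m em] eq]] := V1_ex _ _ F2 (proj1 Pq).
  by exists m; apply: nle_trans eq; exact: HgN.
have [gg Hgg] := fchoice _ _ _ H.
exists (fun n => \max_(i < n.+1) gg i (n - i)) => q Pq N.
have [m Hm] := Hgg N q Pq.
exists (N + m)%N; split; first exact: leq_addr.
apply: nle_trans Hm; apply: cv_mono.
have Hi : (N < (N + m).+1)%N by rewrite ltnS leq_addr.
apply: leq_trans (leq_bigmax (F := fun i : 'I_(N + m).+1 => gg i (N + m - i)%N) (Ordinal Hi)).
by rewrite /= addKn.
Qed.

Lemma key g (Hg : forall q, prime_elt q -> forall N, exists n, (N <= n)%N /\ ~~ (cv n (g n) <= q))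
  q (Pq : prime_elt q) K : exists i, (K <= i)%N /\ ~~ (bv (xs g i) (xs g i.+1) <= q).
Proof.
have [n [Nn Hn]] := Hg q Pq (xs g K).
have [k [Kk /andP [h1 h2]]] := interval _ (xs_inc g) _ _ Nn.
have [j [jg H1 H2]] := cv_split _ _ _ Hn.
have gx : (g n <= xs g k.+2)%N by apply: xs_big; exact: ltnW.
have A1 : ~~ (bv (xs g k) j <= q) := nle_trans (bv_anti _ _ _ h1) H1.
have A2 : ~~ (bv j (xs g k.+2) <= q) := nle_trans (bv_mono _ _ _ gx) H2.
case: (leqP j (xs g k.+1)) => hj.
  by exists k; split => //; exact: nle_trans (bv_mono _ _ _ hj) A1.
by exists k.+1; split; [exact: leqW | exact: nle_trans (bv_anti _ _ _ (ltnW hj)) A2].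
Qed.

Variable sigma : seq (seq T) -> (T -> Prop).
Hypothesis E_in : forall h n x, x \in E h n -> sigma h x.

Lemma final : exists F : nat -> seq T, play_by sigma F /\
    forall p : T, p != \top ->
      forall N, exists n, (N <= n)%N /\ ~~ (fsup (F n) <= p).
Proof.
have [g Hg] := tail_g.
pose y n := xs g n.+1.
pose Fm n := G (hist [seq y i | i <- iota 0 n]) (y n).
have HM : forall n, [seq Fm i | i <- iota 0 n] = hist [seq y i | i <- iota 0 n].
  elim=> // n IH; rewrite -addn1 iotaD add0n !map_cat /= !cats1.
  by rewrite /hist foldl_rcons -/(hist _) IH.
exists Fm; split.
  move=> n e; rewrite HM /Fm /G => /flatten_mapP [i _ ei]; exact: E_in ei.
move=> p np N.
have [q [Pq [pq _]]] : exists q, prime_elt q /\ p <= q /\ ~~ (\top <= q).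
  by apply: EP; rewrite le1x.
have [i [Ni Hi]] := key _ Hg _ Pq N.
exists i; split => //.
have : ~~ (fsup (Fm i) <= q).
  apply: nle_trans Hi; rewrite /Fm -/(av _ _); apply: bv_le; apply: wl_in.
    by rewrite size_map size_iota xs_ge.
  apply/allP => v /mapP [j]; rewrite mem_iota add0n => /andP [_ ji] ->.
  exact: xs_mono.
by apply: contra => h; apply: le_trans pq.
Qed.
End Main.

Theorem proposition2p2 (d : Order.disp_t) (T : tbLatticeType d)
  (sigma : seq (seq T) -> (T -> Prop)) :
  @enough_primes d T -> strategyI sigma -> @Sfin_V1 d T ->
  exists F : nat -> seq T, play_by sigma F /\
    forall p : T, p != \top ->
      forall N, exists n, (N <= n)%N /\ ~~ (fsup (F n) <= p).
Proof.
move=> EP Hs SF.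
have H : forall h, exists En : nat -> seq T,
    (forall n x, x \in En n -> sigma h x) /\ V1 (fun x => exists n, x \in En n).
  by move=> h; apply: (SF (fun _ => sigma h)) => _; exact: Hs.
have [E HE] := fchoice _ _ _ H.
apply: (final E) => //.
- by move=> h; exact: (proj2 (HE h)).
- by move=> h n x; exact: (proj1 (HE h)).
Qed.
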